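(* Let $G$ be a vertex-weighted multigraph and $H$ a submultigraph of $G$. Assume: (a) $G$ is completely multipartite; (b) $\mathrm{wt}_G(v)\geq 2$ for every vertex $v$ of $G$; (c) whenever $\{v_1,\dots,v_s\}\subset V_H$ is a set of mutually non-adjacent vertices of $H$, we have $s\leq\#V_H-4$. Then there exists a vertex-weighted multigraph $G'$, obtained from $G$ by a finite (possibly empty) sequence of admissible contractions, such that $H$ is a spanning submultigraph of $G'$.
   Context: A vertex-weighted multigraph is $G=(V,E,r,\mathrm{wt})$ with $V$ a finite vertex set, $E$ a finite edge set, $r$ assigning to each edge an unordered pair of distinct vertices, $\mathrm{wt}:V\to\mathbb{Z}$. $\deg(v)$ is the number of edges incident to $v$. $G_1$ is a submultigraph of $G_2$ if there are injective $\phi:V_1\to V_2$, $\psi:E_1\to E_2$ with $r_2\circ\psi=\phi\circ r_1$ and $\mathrm{wt}_1\leq\mathrm{wt}_2\circ\phi$; spanning if $\phi$ is bijective. $G$ is completely multipartite if there is no triple of vertices $v_1,v_2,v_3$ with $\{v_1,v_2\}$ and $\{v_1,v_3\}$ non-adjacent but $\{v_2,v_3\}$ adjacent. For adjacent $v,w$, the contraction with respect to $\{v,w\}$ identifies $v,w$ to a vertex of weight $\mathrm{wt}(v)+\mathrm{wt}(w)$, deletes edges between $v$ and $w$, and keeps all other edges and weights. With $m$ the number of edges between $v,w$, the contraction is admissible if, for some labeling of the pair as $v,w$, there is an integer $0\leq l<m$ with: every vertex $x\notin\{v,w\}$ has $\deg(x)\geq 3$; $\mathrm{wt}(v)\geq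 l+1$, $\mathrm{wt}(w)\geq l+2$; $\deg(v)-m+l\geq 3$ and $\deg(w)-m+l\geq 3$. *)

(* Defs.v *)
From mathcomp Require Import all_boot all_order all_algebra.
Set Implicit Arguments. Unset Strict Implicit. Unset Printing Implicit Defensive.
Import GRing.Theory Num.Theory.
Local Open Scope ring_scope.

(* A vertex-weighted multigraph: finite vertex type, finite edge type,
   each edge e has an endpoint set [ends e] (an unordered pair of distinct
   vertices -- enforced by the well-formedness predicate [is_mgraph]),
   and an integer weight on vertices. *)
Record mgraph := MGraph {
  vtx : finType;
  edg : finType;
  ends : edg -> {set vtx};
  wt : vtx -> int }.

Definition is_mgraph (G : mgraph) : Prop :=
  forall e : edg G, #|ends e| = 2%N.

Definition adjacent (G : mgraph) (x y : vtx G) : Prop :=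
  exists e : edg G, ends e = [set x; y].

Definition deg (G : mgraph) (x : vtx G) : nat :=
  #|[set e : edg G | x \in ends e]|.

Definition mult (G : mgraph) (x y : vtx G) : nat :=
  #|[set e : edg G | ends e == [set x; y]]|.

Definition submgraph (G1 G2 : mgraph) : Prop :=
  exists (phi : vtx G1 -> vtx G2) (psi : edg G1 -> edg G2),
    [/\ injective phi, injective psi,
        (forall e, ends (psi e) = phi @: ends e) &
        (forall v, wt v <= wt (phi v))].

Definition spanning_submgraph (G1 G2 : mgraph) : Prop :=
  exists (phi : vtx G1 -> vtx G2) (psi : edg G1 -> edg G2),
    [/\ bijective phi, injective psi,
        (forall e, ends (psi e) = phi @: ends e) &
        (forall v, wt v <= wt (phi v))].

Definition completely_multipartite (G : mgraph) : Prop :=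
  ~ exists v1 v2 v3 : vtx G,
      [/\ ~ adjacent v1 v2, ~ adjacent v1 v3 & adjacent v2 v3].

Section Contraction.
Variables (G : mgraph) (v w : vtx G).

Definition cvtx : finType := option {x : vtx G | x \notin [set v; w]}.
Definition cedg : finType := {e : edg G | ends e != [set v; w]}.

Definition cmap (x : vtx G) : cvtx :=
  match insub x with Some y => Some y | None => None end.

Definition cends (e : cedg) : {set cvtx} := cmap @: ends (val e).

Definition cwt (x : cvtx) : int :=
  match x with None => wt v + wt w | Some y => wt (val y) end.

Definition contract : mgraph := MGraph cends cwt.
End Contraction.

Definition admissible_lab (G : mgraph) (v w : vtx G) : Prop :=
  let m := mult v w in
  exists l : nat, (l < m)%N /\
    [/\ (forall x : vtx G, x != v -> x != w -> (3 <= deg x)%N),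
        wt v >= l%:Z + 1, wt w >= l%:Z + 2,
        (deg v)%:Z - m%:Z + l%:Z >= 3 &
        (deg w)%:Z - m%:Z + l%:Z >= 3].

Definition admissible (G : mgraph) (v w : vtx G) : Prop :=
  adjacent v w /\ (admissible_lab v w \/ admissible_lab w v).

Inductive contracts_to : mgraph -> mgraph -> Prop :=
  | ct_refl G : contracts_to G G
  | ct_step G (v w : vtx G) G' :
      admissible v w -> contracts_to (contract v w) G' -> contracts_to G G'.

Definition mutually_nonadjacent (G : mgraph) (S : {set vtx G}) : Prop :=
  forall x y, x \in S -> y \in S -> ~ adjacent x y.

(* Main.v *)
Require Import Defs.
From mathcomp Require Import all_boot all_order all_algebra.
From mathcomp Require Import zify.
Import GRing.Theory Num.Theory.
Set Implicit Arguments. Unset Strict Implicit. Unset Printing Implicit Defensive.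
Local Open Scope ring_scope.

Definition adjb (G : mgraph) (x y : vtx G) : bool :=
  [exists e : edg G, ends e == [set x; y]].

Lemma adjP (G : mgraph) (x y : vtx G) : reflect (adjacent x y) (adjb x y).
Proof.
apply: (iffP existsP) => [[e /eqP He]|[e He]]; exists e => //; exact/eqP.
Qed.

Lemma adj_sym (G : mgraph) (x y : vtx G) : adjacent x y -> adjacent y x.
Proof. by case=> e He; exists e; rewrite He setUC. Qed.

Lemma mult_sym (G : mgraph) (x y : vtx G) : mult x y = mult y x.
Proof. by rewrite /mult setUC. Qed.

Lemma deg_split (G : mgraph) (x y : vtx G) :
  deg x = (#|[set e : edg G | (x \in ends e) && (ends e != [set x; y])]| + mult x y)%N.
Proof.
rewrite /deg /mult -(cardsID [set e | ends e == [set x; y]] [set e | x \in ends e]) addnC.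
congr (_ + _)%N; apply: eq_card => e; rewrite !inE.
  by rewrite andbC.
by case: eqP => [->|]; rewrite ?andbF // !inE eqxx.
Qed.

Section Count.
Variables (H G : mgraph) (phi : vtx H -> vtx G) (phi_inj : injective phi).

Lemma card_pre1 z : (#|[set a | phi a == z]| <= 1)%N.
Proof.
case: (pickP (fun a => phi a == z)) => [a0 /eqP Ha0 | none].
  rewrite -(cards1 a0); apply: subset_leq_card; apply/subsetP => a.
  rewrite !inE => /eqP Ha; apply/eqP; apply: phi_inj; by rewrite Ha Ha0.
by rewrite (_ : [set a | _] = set0) ?cards0 //; apply/setP => a; rewrite !inE none.
Qed.

Lemma card_pre0 z : (forall a, phi a != z) -> #|[set a | phi a == z]| = 0%N.
Proof.
move=> h; apply/eqP; rewrite cards_eq0; apply/eqP/setP => a.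
by rewrite !inE (negbTE (h a)).
Qed.

Lemma edges_lb x y (S : {set vtx H}) :
  (forall a, a \in S -> [/\ adjacent x (phi a), phi a != x & phi a != y]) ->
  (#|S| <= #|[set e : edg G | (x \in ends e) && (ends e != [set x; y])]|)%N.
Proof.
move=> hS.
pose h := fun e : edg G => ends e :\ x.
have -> : #|S| = #|[set [set phi a] | a in S]|.
  by rewrite card_in_imset // => a b _ _ /set1_inj /phi_inj.
apply: leq_trans (leq_imset_card h _).
apply: subset_leq_card; apply/subsetP => _ /imsetP [a aS ->].
case: (hS a aS) => [[e He] nax nay].
apply/imsetP; exists e.
  rewrite inE He !inE eqxx /=; apply/eqP => E2.
  have : phi a \in [set x; y] by rewrite -E2 !inE eqxx orbT.
  by rewrite !inE (negbTE nax) (negbTE nay).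
by rewrite /h He setU1K // inE eq_sym.
Qed.

Lemma key x y :
  (#|[set a | adjb x (phi a)]| <=
   #|[set a | adjb x (phi a) && (phi a != x) && (phi a != y)]|
   + #|[set a | phi a == x]| + #|[set a | phi a == y]|)%N.
Proof.
set S := [set a | _ && _ && _]; set X := [set a | phi a == x];
  set Y := [set a | phi a == y].
apply: leq_trans (_ : (#|S :|: X :|: Y| <= _)%N).
  apply: subset_leq_card; apply/subsetP => a; rewrite !inE => ->.
  by case: (phi a == x); case: (phi a == y).
apply: leq_trans (leq_card_setU _ _) _.
by rewrite leq_add2r leq_card_setU.
Qed.

Lemma key2 x y :
  (#|[set a | adjb x (phi a) && (phi a != x) && (phi a != y)]| <=
   #|[set e : edg G | (x \in ends e) && (ends e != [set x; y])]|)%N.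
Proof.
apply: edges_lb => a; rewrite !inE => /andP [/andP [/adjP ? ?] ?]; by split.
Qed.

End Count.

Section Contr.
Variables (G : mgraph) (v w : vtx G).

Lemma cmapE_out x (h : x \notin [set v; w]) :
  cmap v w x = Some (exist (fun x => x \notin [set v; w]) x h).
Proof. by rewrite /cmap (insubT (fun x => x \notin [set v; w]) h). Qed.

Lemma cmapE_in x : x \in [set v; w] -> cmap v w x = None.
Proof. by move=> h; rewrite /cmap insubF // h. Qed.

Lemma cmap_inj x y : cmap v w x = cmap v w y ->
  x = y \/ (x \in [set v; w] /\ y \in [set v; w]).
Proof.
case: (boolP (x \in [set v; w])) => hx; case: (boolP (y \in [set v; w])) => hy;
  try by right.
- by rewrite (cmapE_in hx) (cmapE_out hy).
- by rewrite (cmapE_out hx) (cmapE_in hy).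
- rewrite (cmapE_out hx) (cmapE_out hy) => /(congr1 (omap val)) /= [->].
  by left.
Qed.

Lemma adj_contract x u : adjacent x u -> [set x; u] != [set v; w] ->
  @adjacent (contract v w) (cmap v w x) (cmap v w u).
Proof.
case=> e He hne.
have he : ends e != [set v; w] by rewrite He.
exists (exist (fun e => ends e != [set v; w]) e he : cedg v w).
by rewrite /= /cends /= He imsetU1 imset_set1.
Qed.

Lemma card_cvtx : v != w -> (#|cvtx v w|).+1 = #|vtx G|.
Proof.
move=> vw.
have := cardsC [set v; w]; rewrite cards2 vw => <-.
rewrite /cvtx card_option card_sig.
rewrite add2n; congr (_.+2); apply: eq_card => x; by rewrite !inE.
Qed.

End Contr.

Section Main.
Variable H : mgraph.

Definition emb (G : mgraph) (phi : vtx H -> vtx G) (psi : edg H -> edg G) :=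
  [/\ injective phi, injective psi, (forall e, ends (psi e) = phi @: ends e)
    & (forall a, wt a <= wt (phi a))].

Definition inv4 (G : mgraph) (phi : vtx H -> vtx G) :=
  forall x : vtx G, (4 <= #|[set a : vtx H | adjb x (phi a)]|)%N.

Lemma step n : forall (G : mgraph) phi psi, (#|vtx G| <= n)%N -> @emb G phi psi ->
  (forall x : vtx G, 2 <= wt x) -> inv4 phi ->
  exists G' : mgraph, contracts_to G G' /\ spanning_submgraph H G'.
Proof.
elim: n => [|n IH] G phi psi hn [phi_inj psi_inj hends hwt] hw2 h4;
  (case: (boolP [forall x, x \in codom phi]) => [/forallP surj | /forallPn [w hw]]).
- exists G; split; first exact: ct_refl.
  exists phi, psi; split => //.
  by exists (fun y => iinv (surj y)) => y; rewrite ?iinv_f ?f_iinv.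
- have : (0 < #|vtx G|)%N by apply/card_gt0P; exists w.
  lia.
- exists G; split; first exact: ct_refl.
  exists phi, psi; split => //.
  by exists (fun y => iinv (surj y)) => y; rewrite ?iinv_f ?f_iinv.
have hw' : forall a, phi a != w.
  by move=> a; apply: contra hw => /eqP <-; exact: codom_f.
have : (0 < #|[set a | adjb w (phi a)]|)%N by have := h4 w; lia.
case/card_gt0P => a0; rewrite inE => /adjP adj0.
set v := phi a0.
have vw : v != w := hw' a0.
have pw0 := card_pre0 (hw' : forall a, phi a != w).
have p1 := card_pre1 phi_inj.
have hadm : admissible v w.
  split; first exact: adj_sym adj0.
  left; exists 0%N; split.
    case: (adj_sym adj0) => e He.
    by apply/card_gt0P; exists e; rewrite inE He.
  split.
  - move=> x _ xw.
    rewrite (deg_split x w).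
    have := key phi x w; have := key2 phi_inj x w; have := h4 x; have := p1 x.
    rewrite pw0; lia.
  - by have := hw2 v; lia.
  - by have := hw2 w; lia.
  - rewrite (deg_split v w).
    have := key phi v w; have := key2 phi_inj v w; have := h4 v; have := p1 v.
    rewrite pw0; lia.
  - rewrite (deg_split w v) mult_sym.
    have := key phi w v; have := key2 phi_inj w v; have := h4 w; have := p1 v.
    rewrite pw0; lia.
have hne : forall e, ends (psi e) != [set v; w].
  move=> e; rewrite hends; apply/negP => /eqP E.
  have : w \in phi @: ends e by rewrite E !inE eqxx orbT.
  by case/imsetP => a _ /esym/eqP; rewrite (negbTE (hw' a)).
pose phi' := fun a => cmap v w (phi a).
pose psi' := fun e => (exist (fun e => ends e != [set v; w]) (psi e) (hne e) : cedg v w).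
have [G' [hc hsp]] : exists G' : mgraph,
    contracts_to (contract v w) G' /\ spanning_submgraph H G'.
  apply: (IH (contract v w) phi' psi').
  - change (#|cvtx v w| <= n)%N; have := card_cvtx vw; lia.
  - split.
    + move=> a b /cmap_inj [] //; last first.
        rewrite !inE (negbTE (hw' a)) (negbTE (hw' b)) !orbF.
        by case => /eqP ha /eqP hb; apply: phi_inj; rewrite ha hb.
      exact: phi_inj.
    + by move=> e1 e2 /(congr1 val) /= /psi_inj.
    + by move=> e; rewrite /= /cends /= hends -imset_comp.
    + move=> a; rewrite /phi'.
      case: (boolP (phi a \in [set v; w])) => h.
        rewrite (cmapE_in h) /=.
        move: h; rewrite !inE (negbTE (hw' a)) orbF => /eqP ha.
        have := hwt a; have := hw2 w; rewrite ha; lia.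
      by rewrite (cmapE_out h) /=.
  - case=> [y|] /=; first exact: hw2.
    by have := hw2 v; have := hw2 w; lia.
  - have gen : forall (x0 : vtx G) (x : vtx (contract v w)), cmap v w x0 = x ->
       (forall a, adjacent x0 (phi a) -> [set x0; phi a] != [set v; w]) ->
       (#|[set a | adjb x0 (phi a)]| <= #|[set a | @adjb (contract v w) x (phi' a)]|)%N.
      move=> x0 x hx hn0; apply: subset_leq_card; apply/subsetP => a.
      rewrite !inE => /adjP ha; apply/adjP; rewrite -hx.
      by apply: adj_contract => //; apply: hn0.
    case=> [[x0 hx0]|].
      apply: leq_trans (h4 x0) (gen x0 _ (cmapE_out hx0) _).
      move=> a _; apply/negP => /eqP E.
      by move: hx0; rewrite -E !inE eqxx.
    apply: leq_trans (h4 v) (gen v _ (cmapE_in (_ : v \in [set v; w])) _).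
      by rewrite !inE eqxx.
    move=> a _; apply/negP => /eqP E.
    have : w \in [set v; phi a] by rewrite E !inE eqxx orbT.
    by rewrite !inE eq_sym (negbTE vw) eq_sym (negbTE (hw' a)).
exists G'; split => //.
exact: ct_step hadm hc.
Qed.

End Main.

Theorem lemma3p6 (G H : mgraph) :
  is_mgraph G -> is_mgraph H ->
  submgraph H G ->
  completely_multipartite G ->
  (forall v : vtx G, 2 <= wt v) ->
  (forall S : {set vtx H}, mutually_nonadjacent S ->
     (#|S|%:Z <= #|vtx H|%:Z - 4)) ->
  exists G' : mgraph, contracts_to G G' /\ spanning_submgraph H G'.
Proof.
move=> _ _ [phi [psi [phi_inj psi_inj hends hwt]]] hmp hw2 hS.
apply: (@step H #|vtx G| G phi psi) => //.
move=> x.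
set S := [set a | ~~ adjb x (phi a)].
have hm : mutually_nonadjacent S.
  move=> a b; rewrite !inE => /adjP ha /adjP hb [e He].
  apply: hmp; exists x, (phi a), (phi b); split => //.
  by exists (psi e); rewrite hends He imsetU1 imset_set1.
have := hS S hm.
have := cardsC S.
have -> : ~: S = [set a | adjb x (phi a)].
  by apply/setP => a; rewrite !inE negbK.
lia.
Qed.
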